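(* Let $(X,\le)$ be a poset and $E$ an equivalence relation on $X$ with ${\le}\subseteq E$. Let $\alpha:X\to X$ be an order automorphism of $(X,\le)$ and $\beta:X\to X$ a self-inverse dual order automorphism of $(X,\le)$ such that $\alpha,\beta\subseteq E$ and $\beta=\alpha\circ\beta\circ\alpha$. Set $1={\le}$ and $0=\alpha\circ({\le}^c)^\smile$, and for $R\in\mathsf{Up}(\mathbf E)$ define $R'=\alpha\circ\beta\circ R^c\circ\beta$. Then $\mathbf{Dq}(\mathbf E)=\langle\mathsf{Up}(\mathbf E),\cap,\cup,\circ,1,0,{\sim},-,'\rangle$ is a distributive quasi relation algebra. If $\alpha$ is the identity, then $\mathbf{Dq}(\mathbf E)$ is a cyclic distributive quasi relation algebra.
   Context: For binary relations: converse $R^\smile=\{(x,y)\mid(y,x)\in R\}$; composition $R\circ S=\{(x,y)\mid\exists z\,((x,z)\in R,(z,y)\in S)\}$. Functions are identified with their graphs $\{(x,\gamma(x))\}$. For a poset $(X,\le)$ and an equivalence relation $E\supseteq{\le}$, $E$ is partially ordered by $(u,v)\preceq(x,y)$ iff $x\le u$ and $v\le y$; $\mathbf E=(E,\preceq)$, $\mathsf{Up}(\mathbf E)$ is its set of up-sets. For $R\subseteq E$, $R^c=E\setminus R$. On $\mathsf{Up}(\mathbf E)$: $R\backslash S=(R^\smile\circ S^c)^c$, $R/S=(R^c\circ S^\smile)^c$, ${\sim}R=R\backslash 0$, $-R=0/R$. Order automorphism: bijection with $x\le y\iff\alpha(x)\le\alpha(y)$; dual order automorphism: bijection with $x\le y\iff\beta(y)\le\beta(x)$;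 self-inverse: $\beta\circ\beta=\mathrm{id}_X$. A quasi relation algebra is an algebra $\langle A,\wedge,\vee,\cdot,1,0,{\sim},-,'\rangle$ where $\langle A,\wedge,\vee,\cdot,1\rangle$ with residuals $\backslash,/$ is a residuated lattice, $0\in A$, ${\sim}a=a\backslash0$, $-a=0/a$, ${\sim}{-}a={-}{\sim}a=a$, and $'$ satisfies $a''=a$, $(a\vee b)'=a'\wedge b'$, $({\sim}a)'=-(a')$, $(a\cdot b)'=a'+b'$ where $a+b={\sim}(-b\cdot-a)$. It is distributive if its lattice reduct is distributive, cyclic if ${\sim}a=-a$ for all $a$. *)

(* Defs.v *)
Set Implicit Arguments.

Section Rels.
Variable X : Type.
Definition rel := X -> X -> Prop.

Definition conv (R : rel) : rel := fun x y => R y x.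
Definition comp (R S : rel) : rel := fun x y => exists z, R x z /\ S z y.
Definition graph (f : X -> X) : rel := fun x y => y = f x.

(* relative complement R^c = E \ R *)
Definition rcompl (E R : rel) : rel := fun x y => E x y /\ ~ R x y.

Definition is_poset (le : rel) : Prop :=
  (forall x, le x x) /\
  (forall x y, le x y -> le y x -> x = y) /\
  (forall x y z, le x y -> le y z -> le x z).

Definition is_equivalence (E : rel) : Prop :=
  (forall x, E x x) /\ (forall x y, E x y -> E y x) /\
  (forall x y z, E x y -> E y z -> E x z).

Definition subrel (R S : rel) : Prop := forall x y, R x y -> S x y.

Definition is_bijection (f : X -> X) : Prop :=
  exists g : X -> X, (forall x, g (f x) = x) /\ (forall y, f (g y) = y).

Definition order_automorphism (le : rel) (a : X -> X) : Prop :=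
  is_bijection a /\ (forall x y, le x y <-> le (a x) (a y)).

Definition dual_order_automorphism (le : rel) (b : X -> X) : Prop :=
  is_bijection b /\ (forall x y, le x y <-> le (b y) (b x)).

Definition self_inverse (b : X -> X) : Prop := forall x, b (b x) = x.

(* (u,v) <= (x,y) in E  iff  x <= u and v <= y ; up-sets of (E, <=) *)
Definition up_set (le E : rel) (R : rel) : Prop :=
  subrel R E /\
  (forall u v x y, R u v -> E x y -> le x u -> le v y -> R x y).

Definition Dq_meet (R S : rel) : rel := fun x y => R x y /\ S x y.
Definition Dq_join (R S : rel) : rel := fun x y => R x y \/ S x y.
Definition Dq_one (le : rel) : rel := le.
Definition Dq_zero (le E : rel) (a : X -> X) : rel :=
  comp (graph a) (conv (rcompl E le)).
Definition Dq_ldiv (E : rel) (R S : rel) : rel :=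
  rcompl E (comp (conv R) (rcompl E S)).
Definition Dq_rdiv (E : rel) (R S : rel) : rel :=
  rcompl E (comp (rcompl E R) (conv S)).
Definition Dq_prime (E : rel) (a b : X -> X) (R : rel) : rel :=
  comp (comp (comp (graph a) (graph b)) (rcompl E R)) (graph b).
End Rels.

(* Abstract algebra on a carrier subset S of a type T (equality is Leibniz). *)
Section QRA.
Variable T : Type.
Variable S : T -> Prop.
Variables (meet join mul ldiv rdiv : T -> T -> T) (one zero : T)
          (lneg rneg prime : T -> T).

Definition lat_le (a b : T) : Prop := join a b = b.

Definition is_residuated_lattice : Prop :=
  (forall a b, S a -> S b -> S (meet a b)) /\
  (forall a b, S a -> S b -> S (join a b)) /\
  (forall a b, S a -> S b -> S (mul a b)) /\
  (forall a b, S a -> S b -> S (ldiv a b)) /\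
  (forall a b, S a -> S b -> S (rdiv a b)) /\
  S one /\
  (forall a b c, S a -> S b -> S c -> meet a (meet b c) = meet (meet a b) c) /\
  (forall a b c, S a -> S b -> S c -> join a (join b c) = join (join a b) c) /\
  (forall a b, S a -> S b -> meet a b = meet b a) /\
  (forall a b, S a -> S b -> join a b = join b a) /\
  (forall a b, S a -> S b -> meet a (join a b) = a) /\
  (forall a b, S a -> S b -> join a (meet a b) = a) /\
  (forall a b c, S a -> S b -> S c -> mul a (mul b c) = mul (mul a b) c) /\
  (forall a, S a -> mul one a = a) /\
  (forall a, S a -> mul a one = a) /\
  (forall a b c, S a -> S b -> S c ->
     (lat_le (mul a b) c <-> lat_le b (ldiv a c)) /\
     (lat_le (mul a b) c <-> lat_le a (rdiv c b))).

Definition qra_plus (a b : T) : T := lneg (mul (rneg b) (rneg a)).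

Definition is_quasi_relation_algebra : Prop :=
  is_residuated_lattice /\
  S zero /\
  (forall a, S a -> lneg a = ldiv a zero) /\
  (forall a, S a -> rneg a = rdiv zero a) /\
  (forall a, S a -> S (prime a)) /\
  (forall a, S a -> lneg (rneg a) = a /\ rneg (lneg a) = a) /\
  (forall a, S a -> prime (prime a) = a) /\
  (forall a b, S a -> S b -> prime (join a b) = meet (prime a) (prime b)) /\
  (forall a, S a -> prime (lneg a) = rneg (prime a)) /\
  (forall a b, S a -> S b -> prime (mul a b) = qra_plus (prime a) (prime b)).

Definition is_distributive : Prop :=
  forall a b c, S a -> S b -> S c ->
    meet a (join b c) = join (meet a b) (meet a c).

Definition is_cyclic : Prop := forall a, S a -> lneg a = rneg a.
End QRA.

Definition Dq_is_DqRA (X : Type) (le E : rel X) (a b : X -> X) : Prop :=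
  is_quasi_relation_algebra (up_set le E)
    (@Dq_meet X) (@Dq_join X) (@comp X) (Dq_ldiv E) (Dq_rdiv E)
    (Dq_one le) (Dq_zero le E a)
    (fun R => Dq_ldiv E R (Dq_zero le E a))
    (fun R => Dq_rdiv E (Dq_zero le E a) R)
    (Dq_prime E a b)
  /\ is_distributive (up_set le E) (@Dq_meet X) (@Dq_join X).

Definition Dq_is_cyclic (X : Type) (le E : rel X) (a : X -> X) : Prop :=
  is_cyclic (up_set le E)
    (fun R => Dq_ldiv E R (Dq_zero le E a))
    (fun R => Dq_rdiv E (Dq_zero le E a) R).

(* Main.v *)
Require Import Defs.
From Stdlib Require Import Classical FunctionalExtensionality PropExtensionality.

Theorem theorem3p15 (X : Type) (le E : rel X) (a b : X -> X)
  (Hpo : is_poset le) (HE : is_equivalence E) (HleE : subrel le E)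
  (Ha : order_automorphism le a)
  (Hb : dual_order_automorphism le b) (Hbinv : self_inverse b)
  (HaE : subrel (graph a) E) (HbE : subrel (graph b) E)
  (Hbab : graph b = comp (comp (graph a) (graph b)) (graph a)) :
  Dq_is_DqRA le E a b /\
  ((forall x, a x = x) -> Dq_is_DqRA le E a b /\ Dq_is_cyclic le E a).
Proof.
  destruct Hpo as [Hrefl [Hanti Htrans]].
  destruct HE as [ERefl [ESym ETrans]].
  destruct Ha as [[g [Hga Hag]] Hale].
  destruct Hb as [_ Hble].
  unfold self_inverse in Hbinv.
  assert (Hbab' : forall x, b x = a (b (a x))).
  { intro x. assert (H: graph b x (b x)) by reflexivity. rewrite Hbab in H.
    destruct H as [z [[w [Hw Hz]] Hy]]. unfold graph in Hw, Hz, Hy.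
    rewrite Hy, Hz, Hw. reflexivity. }
  assert (Hext : forall R S : rel X, (forall x y, R x y <-> S x y) -> R = S).
  { intros R S H. apply functional_extensionality; intro x;
    apply functional_extensionality; intro y; apply propositional_extensionality; apply H. }
  assert (HaE' : forall x, E x (a x)) by (intro; apply HaE; reflexivity).
  assert (HbE' : forall x, E x (b x)) by (intro; apply HbE; reflexivity).
  assert (HgE : forall x, E x (g x)).
  { intro x. pattern x at 1. rewrite <- (Hag x). apply ESym, HaE'. }
  assert (Hgle : forall x y, le (g x) (g y) <-> le x y).
  { intros x y. rewrite (Hale (g x) (g y)), !Hag. tauto. }
  assert (gb : forall y, g (b y) = b (a y)).
  { intro y. rewrite (Hbab' y). apply Hga. }
  assert (baba : forall x, b (a (b (a x))) = x).
  { intro x. rewrite <- (Hbab' x). apply Hbinv. }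
  assert (Eresp : forall x y x' y', E x x' -> E y y' -> (E x y <-> E x' y')).
  { intros x y x' y' H1 H2; split; intro H; eauto. }
  assert (Eba : forall x y, E x y <-> E (b (a x)) (b y)).
  { intros x y. apply Eresp; eauto. }
  set (U := up_set le E).
  assert (latle : forall A B : rel X, lat_le (@Dq_join X) A B <-> subrel A B).
  { intros A B; unfold lat_le; split.
    - intros H x y HA. rewrite <- H. left; exact HA.
    - intro H. apply Hext. intros x y; unfold Dq_join; split; [intros [h|h]; auto | auto]. }
  set (Z := Dq_zero le E a).
  assert (zero_iff : forall x y, Z x y <-> E y (a x) /\ ~ le y (a x)).
  { intros x y; unfold Z, Dq_zero, comp, graph, conv, rcompl; split.
    - intros [z [Hz H]]; subst; exact H.
    - intro H; exists (a x); auto. }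

  assert (Eg : forall y, E (g y) y) by (intro; apply ESym, HgE).
  assert (cl_meet : forall R S, U R -> U S -> U (Dq_meet R S)).
  { intros R S [HR1 HR2] [HS1 HS2]; split.
    - intros x y [h _]; auto.
    - intros u v x y [h1 h2] Hxy H1 H2; split; eauto. }
  assert (cl_join : forall R S, U R -> U S -> U (Dq_join R S)).
  { intros R S [HR1 HR2] [HS1 HS2]; split.
    - intros x y [h|h]; auto.
    - intros u v x y [h|h] Hxy H1 H2; [left|right]; eauto. }
  assert (cl_comp : forall R S, U R -> U S -> U (comp R S)).
  { intros R S [HR1 HR2] [HS1 HS2]; split.
    - intros x y [z [h1 h2]]; eauto.
    - intros u v x y [z [h1 h2]] Hxy H1 H2. exists z; split.
      + apply (HR2 u z); auto. apply ETrans with u; auto.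
      + apply (HS2 z v); auto. apply ETrans with x; auto. apply ETrans with u; auto. }
  assert (cl_ldiv : forall R S, U R -> U S -> U (Dq_ldiv E R S)).
  { intros R S [HR1 HR2] [HS1 HS2]; split.
    - intros x y [h _]; auto.
    - intros u v x y [Huv Hn] Hxy H1 H2. split; auto.
      intros [z [Hzx [Ezy HnS]]]. apply Hn. exists z. 
      assert (Rzu : R z u). { apply (HR2 z x); auto. apply ETrans with x; auto. }
      split; [exact Rzu|]. split.
      + apply ETrans with u; auto.
      + intro HSzv. apply HnS. apply (HS2 z v); auto. }
  assert (cl_rdiv : forall R S, U R -> U S -> U (Dq_rdiv E R S)).
  { intros R S [HR1 HR2] [HS1 HS2]; split.
    - intros x y [h _]; auto.
    - intros u v x y [Huv Hn] Hxy H1 H2. split; auto.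
      intros [z [[Exz HnR] Syz]]. apply Hn. exists z.
      assert (Svz : S v z). { apply (HS2 y z); auto. apply ETrans with y; auto. }
      split; [|exact Svz]. split.
      + apply ETrans with x; auto.
      + intro HRuz. apply HnR. apply (HR2 u z); auto. }
  assert (cl_one : U (Dq_one le)).
  { split; [exact HleE|]. intros u v x y H _ H1 H2. unfold Dq_one in *. eauto. }
  assert (cl_zero : U Z).
  { split.
    - intros x y H. apply zero_iff in H. destruct H. apply ETrans with (a x); auto.
    - intros u v x y H Hxy H1 H2. apply zero_iff in H. apply zero_iff. destruct H as [Ev Nv].
      split.
      + apply ETrans with x; auto.
      + intro Hy. apply Nv. apply Htrans with y; auto. apply Htrans with (a x); auto.
        apply (proj1 (Hale x u)); auto. }
  assert (prime_iff : forall R x y, Dq_prime E a b R x y <-> E (b (a x)) (b y) /\ ~ R (b (a x)) (b y)).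
  { intros R x y; unfold Dq_prime, comp, graph, rcompl; split.
    - intros [w [[v [[u [Hu Hv]] H]] Hy]]. subst. rewrite Hbinv. exact H.
    - intro H. exists (b y). split; [|symmetry; apply Hbinv]. exists (b (a x)). split; auto.
      exists (a x); auto. }
  assert (cl_prime : forall R, U R -> U (Dq_prime E a b R)).
  { intros R [HR1 HR2]; split.
    - intros x y H. apply prime_iff in H. apply (proj2 (Eba _ _)). tauto.
    - intros u v x y H Hxy H1 H2. apply prime_iff in H. apply prime_iff. destruct H as [Ev Nv].
      split. { apply (proj1 (Eba _ _)); auto. }
      intro HR. apply Nv. apply (HR2 (b (a x)) (b y)); auto.
      + apply (proj1 (Hble (a x) (a u))). apply (proj1 (Hale x u)). auto.
      + apply (proj1 (Hble v y)). auto. }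
  assert (lneg_iff : forall R, U R -> forall x y,
            Dq_ldiv E R Z x y <-> E x y /\ ~ R (g y) x).
  { intros R [HR1 HR2] x y; unfold Dq_ldiv, comp, conv, rcompl; split.
    - intros [Exy Hn]. split; auto. intro HR. apply Hn. exists (g y). split; auto.
      split; auto. rewrite zero_iff, Hag. generalize (Hrefl y). tauto.
    - intros [Exy Hn]. split; auto. intros [z [Rzx [Ezy HnZ]]].
      rewrite zero_iff in HnZ.
      assert (Hl : le y (a z)).
      { apply NNPP. intro H. apply HnZ. split; auto. apply ETrans with z; auto. }
      apply Hn. apply (HR2 z x); auto.
      + apply ETrans with y; auto.
      + rewrite <- (Hga z). apply Hgle. exact Hl. }
  assert (rneg_iff : forall R, U R -> forall x y,
            Dq_rdiv E Z R x y <-> E x y /\ ~ R y (a x)).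
  { intros R [HR1 HR2] x y; unfold Dq_rdiv, comp, conv, rcompl; split.
    - intros [Exy Hn]. split; auto. intro HR. apply Hn. exists (a x). split; auto.
      split; auto. rewrite zero_iff. generalize (Hrefl (a x)). tauto.
    - intros [Exy Hn]. split; auto. intros [z [[Exz HnZ] Ryz]].
      rewrite zero_iff in HnZ.
      assert (Hl : le z (a x)).
      { apply NNPP. intro H. apply HnZ. split; auto. apply ETrans with x; auto. }
      apply Hn. apply (HR2 y z); auto. apply ETrans with x; auto. }

  assert (resid : forall R S T, U R -> U S -> U T ->
     (lat_le (@Dq_join X) (comp R S) T <-> lat_le (@Dq_join X) S (Dq_ldiv E R T)) /\
     (lat_le (@Dq_join X) (comp R S) T <-> lat_le (@Dq_join X) R (Dq_rdiv E T S))).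
  { intros R S T [HR1 HR2] [HS1 HS2] _. rewrite !latle. split; split.
    - intros H x y HS. split; [auto|]. intros [z [Rzx [Ezy nT]]]. apply nT, H. exists x; auto.
    - intros H x y [z [Rxz Szy]]. apply NNPP; intro nT. destruct (H z y Szy) as [_ Hn].
      apply Hn. exists x. split; [exact Rxz|]. split; [|exact nT]. apply ETrans with z; auto.
    - intros H x y Rxy. split; [auto|]. intros [z [[Exz nT] Syz]]. apply nT, H. exists y; auto.
    - intros H x y [z [Rxz Szy]]. apply NNPP; intro nT. destruct (H x z Rxz) as [_ Hn].
      apply Hn. exists y. split; [|exact Szy]. split; [|exact nT]. apply ETrans with z; auto. }
  assert (DQ : Dq_is_DqRA le E a b).
  { unfold Dq_is_DqRA, is_quasi_relation_algebra, is_residuated_lattice, is_distributive.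
    change (Dq_zero le E a) with Z.
    split; [split|].
    - split; [exact cl_meet|]. split; [exact cl_join|]. split; [exact cl_comp|].
      split; [exact cl_ldiv|]. split; [exact cl_rdiv|]. split; [exact cl_one|].
      split. { intros; apply Hext; intros; unfold Dq_meet; tauto. }
      split. { intros; apply Hext; intros; unfold Dq_join; tauto. }
      split. { intros; apply Hext; intros; unfold Dq_meet; tauto. }
      split. { intros; apply Hext; intros; unfold Dq_join; tauto. }
      split. { intros; apply Hext; intros; unfold Dq_meet, Dq_join; tauto. }
      split. { intros; apply Hext; intros; unfold Dq_meet, Dq_join; tauto. }
      split. { intros; apply Hext; intros; unfold comp; firstorder. }
      split.
      { intros R [HR1 HR2]; apply Hext; intros x y; unfold comp, Dq_one; split.
        - intros [z [H1 H2]]; apply (HR2 z y); auto; apply ETrans with z; auto.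
        - intro H; exists x; auto. }
      split.
      { intros R [HR1 HR2]; apply Hext; intros x y; unfold comp, Dq_one; split.
        - intros [z [H1 H2]]; apply (HR2 x z); auto; apply ETrans with z; auto.
        - intro H; exists y; auto. }
      exact resid.
    - split; [exact cl_zero|].
      split; [reflexivity|]. split; [reflexivity|].
      split; [exact cl_prime|].
      split.
      { intros R HR. split; apply Hext; intros x y.
        - rewrite (lneg_iff _ (cl_rdiv _ _ cl_zero HR)), (rneg_iff _ HR), Hag.
          destruct HR as [HR1 _]. split.
          + intros [Exy Hn]; apply NNPP; intro nR; apply Hn; split; [|exact nR].
            apply ETrans with y; auto.
          + intro H; split; [auto|tauto].
        - rewrite (rneg_iff _ (cl_ldiv _ _ HR cl_zero)), (lneg_iff _ HR), Hga.
          destruct HR as [HR1 _]. split.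
          + intros [Exy Hn]; apply NNPP; intro nR; apply Hn; split; [|exact nR].
            apply ETrans with x; auto.
          + intro H; split; [auto|tauto]. }
      split.
      { intros R HR; apply Hext; intros x y. rewrite !prime_iff, baba, Hbinv, <- Eba.
        destruct HR as [HR1 _].
        split; [intros [h1 h2]; apply NNPP; tauto | intro H; generalize (HR1 _ _ H); tauto]. }
      split.
      { intros R S _ _; apply Hext; intros x y; unfold Dq_meet; rewrite !prime_iff;
        unfold Dq_join; tauto. }
      split.
      { intros R HR. apply Hext; intros x y.
        rewrite (prime_iff _ x y), (lneg_iff _ HR), gb, (rneg_iff _ (cl_prime _ HR)), prime_iff.
        rewrite <- (Eba x y), <- (Eba y (a x)).
        assert (EE : E x y -> E y (a x)) by (intro; apply ETrans with x; auto).
        split; intros [h1 h2]; split; auto; intros [h3 h4]; apply h2; split; auto. }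
      { intros R S HR HS. unfold qra_plus. apply Hext; intros x y.
        rewrite (prime_iff _ x y).
        rewrite (lneg_iff _ (cl_comp _ _ (cl_rdiv _ _ cl_zero (cl_prime _ HS))
                                         (cl_rdiv _ _ cl_zero (cl_prime _ HR)))).
        rewrite <- (Eba x y).
        pose proof HR as [HR1 HR2]. pose proof HS as [HS1 HS2].
        split.
        - intros [Exy Hn]; split; auto. intros [z [H1 H2]].
          rewrite (rneg_iff _ (cl_prime _ HS)), prime_iff, Hag in H1.
          rewrite (rneg_iff _ (cl_prime _ HR)), prime_iff in H2.
          destruct H1 as [E1 N1]. destruct H2 as [E2 N2].
          apply Hn. exists (b (a z)). split; apply NNPP; intro K.
          + apply N2. split; [|exact K]. apply (proj1 (Eba _ _)).
            apply ETrans with z; auto.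
          + apply N1. split; [|exact K]. apply (proj1 (Eba _ _)).
            apply ETrans with (g y); auto.
        - intros [Exy Hn]; split; auto. intros [w [Rw Sw]]. apply Hn.
          exists (g (b w)). rewrite gb. split.
          + rewrite (rneg_iff _ (cl_prime _ HS)), prime_iff, Hag, baba.
            split; [|tauto].
            assert (E w (b y)) by auto.
            apply ETrans with y; auto. apply ETrans with (b y); auto.
            apply ETrans with w; auto. apply ETrans with (a w); auto.
          + rewrite (rneg_iff _ (cl_prime _ HR)), prime_iff, baba.
            split; [|tauto].
            assert (E (b (a x)) w) by auto.
            apply ETrans with (a w); auto. apply ETrans with w; auto.
            apply ETrans with (b (a x)); auto. apply ETrans with (a x); auto. }
    - intros R S T _ _ _; apply Hext; intros; unfold Dq_meet, Dq_join; tauto. }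
  split; [exact DQ|]. intro Hid. split; [exact DQ|].
  assert (Hgid : forall y, g y = y).
  { intro y. transitivity (g (a y)); [rewrite Hid; reflexivity | apply Hga]. }
  unfold Dq_is_cyclic, is_cyclic. change (Dq_zero le E a) with Z. intros R HR. apply Hext; intros x y.
  rewrite (lneg_iff _ HR), (rneg_iff _ HR), Hid, Hgid. tauto.
Qed.
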